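(* Let $G$ and $H$ be finite groups. Then $A_G(t)=A_H(t)$ if and only if $G$ and $H$ have the same class equation.
   Context: For a finite group $G$ and an integer $n\ge 0$, $G$ acts on the Cartesian power $G^n$ by simultaneous conjugation $g\cdot(x_1,\dots,x_n)=(gx_1g^{-1},\dots,gx_ng^{-1})$. Let $\alpha_{G,n}$ denote the number of $G$-orbits on $G^n$ (so $\alpha_{G,0}=1$), and let $A_G(t)=\sum_{n\ge 0}\alpha_{G,n}t^n$ (a formal power series, which is a rational function of $t$). Two finite groups $G$ and $H$ have the same class equation if $|G|=|H|$ and the multiset of cardinalities of the conjugacy classes of $G$ equals that of $H$ (equivalently, for every $m$, the number of elements whose centralizer has order $m$ is the same in $G$ and in $H$). *)

(* Defs.v *)
From mathcomp Require Import all_boot all_fingroup.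
Set Implicit Arguments. Unset Strict Implicit. Unset Printing Implicit Defensive.
Local Open Scope group_scope.

(* A finite group G is represented by a finGroupType gT, G = [set: gT]. *)

Definition conj_tuple (gT : finGroupType) (n : nat)
  (x : {ffun 'I_n -> gT}) (g : gT) : {ffun 'I_n -> gT} :=
  [ffun i => x i ^ g].

Definition conj_orbit (gT : finGroupType) (n : nat) (x : {ffun 'I_n -> gT})
  : {set {ffun 'I_n -> gT}} :=
  [set conj_tuple x g | g in [set: gT]].

Definition alpha (gT : finGroupType) (n : nat) : nat :=
  #|[set conj_orbit x | x in [set: {ffun 'I_n -> gT}]]|.

(* A_G(t), represented by its coefficient sequence (a formal power series). *)
Definition A_series (gT : finGroupType) : nat -> nat := fun n => alpha gT n.

Definition same_class_equation (gT hT : finGroupType) : Prop :=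
  #|[set: gT]| = #|[set: hT]| /\
  perm_eq [seq #|C| | C : {set gT} <- enum (classes [set: gT])]
          [seq #|C| | C : {set hT} <- enum (classes [set: hT])].

(* Main.v *)
Require Import Defs.
From mathcomp Require Import all_boot all_fingroup.
From mathcomp Require Import zify.
From Stdlib Require Import FunctionalExtensionality.
Set Implicit Arguments. Unset Strict Implicit. Unset Printing Implicit Defensive.

Definition ps (s : seq nat) n := \sum_(x <- s) x ^ n.

Lemma bern d n : d ^ n * (d + n) <= (d.+1) ^ n * d.
Proof.
elim: n => [|n IH]; first by rewrite !expn0 addn0.
rewrite !expnS; set a := d ^ n in IH *; set b := d.+1 ^ n in IH *.
nia.
Qed.

Lemma bigk k d : k * d ^ (k*d).+1 < d.+1 ^ (k*d).+1.
Proof.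
case: d => [|d]; first by rewrite muln0 expn1 muln0.
have := bern d.+1 (k * d.+1).+1.
have : 0 < d.+1 ^ (k * d.+1).+1 by rewrite expn_gt0.
set a := d.+1 ^ _; set b := d.+2 ^ _. nia.
Qed.

Lemma ps_size s : ps s 0 = size s.
Proof. by rewrite /ps (eq_bigr (fun _ => 1)) ?sum1_size // => i _; rewrite expn0. Qed.

Lemma ps_cat s t n : ps (s ++ t) n = ps s n + ps t n.
Proof. by rewrite /ps big_cat. Qed.

Lemma ps_perm s t n : perm_eq s t -> ps s n = ps t n.
Proof. by move=> p; rewrite /ps (perm_big _ p). Qed.

Lemma ps_nseq a M n : ps (nseq a M) n = a * M ^ n.
Proof. elim: a => [|a IH]; first by rewrite /ps big_nil. by rewrite /ps /= big_cons -/(ps _ _) IH mulSn. Qed.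

Lemma expmono x d n : x <= d -> x ^ n <= d ^ n.
Proof. move=> h; elim: n => [|n IH]; rewrite ?expn0 // !expnS leq_mul //. Qed.

Lemma ps_le s d n : (forall x, x \in s -> x <= d) -> ps s n <= size s * d ^ n.
Proof.
elim: s => [|x s IH] H; first by rewrite /ps big_nil.
rewrite /ps big_cons -/(ps _ _) /= mulSn leq_add //.
  by apply: expmono; apply: H; rewrite inE eqxx.
by apply: IH => y ys; apply: H; rewrite inE ys orbT.
Qed.

Lemma maxP (s : seq nat) : s != [::] ->
  foldr maxn 0 s \in s /\ forall x, x \in s -> x <= foldr maxn 0 s.
Proof.
elim: s => [|x s IH] //= _; case: (s =P [::]) => [->|/eqP ne] /=.
  by rewrite maxn0 inE eqxx; split => // y; rewrite inE => /eqP ->.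
have [IH1 IH2] := IH ne; split.
  by case: (leqP x (foldr maxn 0 s)) => h; rewrite inE ?IH1 ?eqxx ?orbT.
move=> y; rewrite inE => /orP [/eqP ->|ys]; first exact: leq_maxl.
by apply: leq_trans (IH2 _ ys) (leq_maxr _ _).
Qed.

Lemma filter1 (M : nat) s : filter (pred1 M) s = nseq (count (pred1 M) s) M.
Proof. by rewrite -size_filter; apply/all_pred1P; rewrite filter_all. Qed.

Lemma ps_split M s n : ps s n = count (pred1 M) s * M ^ n + ps (filter (predC1 M) s) n.
Proof.
by rewrite -ps_nseq -filter1 -ps_cat; apply: ps_perm; rewrite perm_sym perm_filterC.
Qed.

Lemma ps_perm_eq N : forall s t, size s <= N -> (forall n, ps s n = ps t n) -> perm_eq s t.
Proof.
elim: N => [|N IH] s t.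
  rewrite leqn0 => /nilP -> H; have := H 0; rewrite !ps_size /= => /esym/eqP/nilP ->.
  exact: perm_refl.
move=> sz H.
have szst : size s = size t by rewrite -!ps_size H.
case: (s =P [::]) => [s0|/eqP sne].
  have t0 : t = [::] by apply/nilP; rewrite /nilp -szst s0.
  by rewrite s0 t0.
have ne : s ++ t != [::] by move: sne; clear; case: s.
have [Min Mle] := @maxP _ ne; set M := foldr maxn 0 _ in Min Mle.
have ceq : count (pred1 M) s = count (pred1 M) t.
  case: (posnP M) => [M0|Mpos].
    have al : forall u, (forall x, x \in u -> x <= M) -> count (pred1 M) u = size u.
      move=> u hu; apply/eqP; rewrite -all_count; apply/allP => x /hu.
      by rewrite M0 leqn0.
    rewrite !al ?szst // => x xs; apply: Mle; rewrite mem_cat xs ?orbT //.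
  have key : forall u v, size u = size s -> (forall x, x \in u -> x <= M) ->
      (forall n, ps u n = ps v n) -> count (pred1 M) v <= count (pred1 M) u.
    move=> u v hs hu hp; rewrite leqNgt; apply/negP => lt.
    set k := size u; set d := M.-1; set n := (k * d).+1.
    have Md : M = d.+1 by rewrite /d prednK.
    have h1 := ps_split M u n; have h2 := ps_split M v n.
    have h3 : ps (filter (predC1 M) u) n <= k * d ^ n.
      apply: (@leq_trans (size (filter (predC1 M) u) * d ^ n)).
        apply: ps_le.
        2: by rewrite leq_mul2r size_filter count_size orbT.
      move=> x; rewrite mem_filter /= => /andP [xM xu].
      have := hu _ xu; rewrite leq_eqVlt (negbTE xM) /= Md ltnS //.
    have h4 := bigk k d; rewrite -/n -Md in h4.
    have := hp n; rewrite h1 h2.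
    set a := count _ u in lt *; set b := count _ v in lt *.
    set P := ps (filter _ u) n in h3 *; set Q := ps (filter _ v) n.
    set e := M ^ n in h4 *; set f := d ^ n in h3 h4.
    nia.
  apply/eqP; rewrite eqn_leq; apply/andP; split.
    apply: (key t s); first by rewrite szst.
      by move=> x xt; apply: Mle; rewrite mem_cat xt orbT.
    by move=> n; rewrite H.
  by apply: (key s t) => // x xs; apply: Mle; rewrite mem_cat xs.
have cpos : 0 < count (pred1 M) s.
  move: Min; rewrite mem_cat => /orP [] h; [|rewrite ceq]; rewrite lt0n; apply/negP => /eqP /count_memPn; by rewrite h.
have IH' : perm_eq (filter (predC1 M) s) (filter (predC1 M) t).
  apply: IH.
    move: sz; rewrite size_filter -(count_predC (pred1 M) s) /=.
    have -> : count (predC (pred1 M)) s = count (predC1 M) s by [].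
    move: cpos; move: (count (pred1 M) s) (count (predC1 M) s) => a b. lia.
  by move=> n; move: (H n); rewrite (ps_split M s) (ps_split M t) ceq => /addnI.
rewrite -(perm_filterC (pred1 M) s) perm_sym -(perm_filterC (pred1 M) t) perm_sym.
by rewrite !filter1 ceq perm_cat2l.
Qed.

Local Open Scope group_scope.

Section GA.
Variables (gT : finGroupType) (n : nat).

Lemma ct1 : (@conj_tuple gT n)^~ 1 =1 id.
Proof. by move=> x; apply/ffunP => i; rewrite ffunE conjg1. Qed.

Lemma ctM : forall x, act_morph (@conj_tuple gT n) x.
Proof. by move=> x a b; apply/ffunP => i; rewrite !ffunE conjgM. Qed.

Definition cto := TotalAction ct1 ctM.

Lemma alpha_sum : (alpha gT n * #|[set: gT]| = \sum_(g : gT) #|'C[g]| ^ n)%N.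
Proof.
have acts : [acts [set: gT], on [set: {ffun 'I_n -> gT}] | cto].
  by apply/actsP => a _ x; rewrite !inE.
have := Frobenius_Cauchy acts.
have -> : [set orbit cto [set: gT] x | x in [set: {ffun 'I_n -> gT}]] =
          [set conj_orbit x | x in [set: {ffun 'I_n -> gT}]] by [].
rewrite -/(alpha gT n) => <-.
apply: eq_big => [g|g _]; first by rewrite inE.
rewrite setTI; have -> : expn #|'C[g]| n = expn #|'C[g]| #|'I_n| by rewrite card_ord.
rewrite -card_ffun_on; apply: eq_card => x.
apply/afix1P/ffun_onP => [h i|h].
  by rewrite -h /= ffunE; apply/cent1P/commgP/conjg_fixP; rewrite -[in RHS]h ffunE.
apply/ffunP => i; rewrite /= ffunE; apply/conjg_fixP/commgP/cent1P; exact: h.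
Qed.
End GA.
Section GB.
Variables (gT : finGroupType).

Lemma cent_card (g : gT) : (#|'C[g]| * #|g ^: [set: gT]| = #|[set: gT]|)%N.
Proof.
by rewrite -index_cent1 -(LagrangeI [set: gT]%G 'C[g]%G) /= !setTI.
Qed.

Lemma sum_classes n :
  (\sum_(g : gT) #|'C[g]| ^ n.+1 =
  #|[set: gT]| * \sum_(C in classes [set: gT]) (#|[set: gT]| %/ #|C|) ^ n)%N.
Proof.
rewrite (eq_bigl (fun g => g \in [set: gT])); last by move=> g; rewrite inE.
rewrite (set_partition_big _ (classes_partition [set: gT])) big_distrr.
apply: eq_bigr => C /imsetP [x _ ->].
have cpos : 0 < #|x ^: [set: gT]| by apply/card_gt0P; exists x; exact: class_refl.
rewrite -(cent_card x) mulnK //.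
rewrite (eq_bigr (fun _ => expn #|'C[x]| n.+1)); last first.
  move=> g gx; congr (expn _ _); apply/eqP.
  have e1 := cent_card g; have e2 := cent_card x; rewrite (class_eqP gx) in e1.
  by rewrite -(eqn_pmul2r cpos) e1 e2.
by rewrite sum_nat_const expnS mulnA [(#|_| * _)%N]mulnC.
Qed.
End GB.

Definition zs (gT : finGroupType) : seq nat :=
  [seq #|[set: gT]| %/ #|C| | C : {set gT} <- enum (classes [set: gT])].
Definition cs (gT : finGroupType) : seq nat :=
  [seq #|C| | C : {set gT} <- enum (classes [set: gT])].

Lemma zs_cs (gT : finGroupType) : zs gT = [seq #|[set: gT]| %/ c | c <- cs gT].
Proof. by rewrite /zs /cs -map_comp. Qed.

Lemma class_div (gT : finGroupType) C : C \in classes [set: gT] ->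
  (#|[set: gT]| %/ (#|[set: gT]| %/ #|C|) = #|C| /\ #|[set: gT]| %/ #|C| <= #|[set: gT]|)%N.
Proof.
move=> /imsetP [x _ ->]; rewrite -(cent_card x).
have cpos : (0 < #|x ^: [set: gT]|)%N by apply/card_gt0P; exists x; exact: class_refl.
have zpos : (0 < #|'C[x]|)%N by apply/card_gt0P; exists x; exact: cent1id.
rewrite mulnK // mulKn //; split => //; exact: leq_pmulr.
Qed.

Lemma cs_zs (gT : finGroupType) : cs gT = [seq #|[set: gT]| %/ z | z <- zs gT].
Proof.
rewrite /zs /cs -map_comp; apply/esym/eq_in_map => C; rewrite mem_enum => /class_div [h _].
by rewrite /= h.
Qed.

Lemma alpha_succ (gT : finGroupType) n : alpha gT n.+1 = ps (zs gT) n.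
Proof.
have := alpha_sum gT n.+1; rewrite sum_classes mulnC => /eqP.
rewrite eqn_pmul2l ?cardG_gt0 // => /eqP ->.
by rewrite /ps /zs big_map big_enum.
Qed.

Lemma alpha_0 (gT : finGroupType) : alpha gT 0 = 1%N.
Proof.
have := alpha_sum gT 0.
rewrite (eq_bigr (fun _ => 1%N)); last by move=> i _; rewrite expn0.
rewrite sum1_card -cardsT -{2}(mul1n #|_|) => /eqP.
by rewrite eqn_pmul2r ?cardG_gt0 // => /eqP.
Qed.

Lemma N_in_zs (gT : finGroupType) : #|[set: gT]| \in zs gT.
Proof.
apply/mapP; exists [1]%g; first by rewrite mem_enum classes1.
by rewrite cards1 divn1.
Qed.

Lemma zs_le (gT : finGroupType) z : z \in zs gT -> (z <= #|[set: gT]|)%N.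
Proof. by case/mapP => C; rewrite mem_enum => /class_div [_ h] ->. Qed.

Theorem theorem2p1 (gT hT : finGroupType) :
  A_series gT = A_series hT <-> same_class_equation gT hT.
Proof.
split.
  move=> eqA.
  have pz : perm_eq (zs gT) (zs hT).
    apply: (@ps_perm_eq (size (zs gT))) => // n.
    by rewrite -!alpha_succ; have := congr1 (fun f => f n.+1) eqA.
  have eN : #|[set: gT]| = #|[set: hT]|.
    apply/eqP; rewrite eqn_leq; apply/andP; split.
      by apply: zs_le; rewrite -(perm_mem pz) N_in_zs.
    by apply: zs_le; rewrite (perm_mem pz) N_in_zs.
  split => //.
  have := cs_zs gT; rewrite /cs => ->; have := cs_zs hT; rewrite /cs => ->.
  by rewrite eN; apply: perm_map.
case=> eN pc; apply: functional_extensionality => n; rewrite /A_series.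
case: n => [|n]; first by rewrite !alpha_0.
rewrite !alpha_succ !zs_cs eN; apply: ps_perm; exact: perm_map.
Qed.
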